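(* Let $c>0$ and $P\ge 1$ be constants, and let $$\Omega=\{(u,v,L,A): 0\le A\le 1;\ u,v,L\ge 0;\ uv\le 1;\ uv\le L\le P\sqrt{uv}\},\qquad \Omega_0=\{(u,v,A): 0\le A\le 1;\ u,v\ge 0;\ uv\le 1\}.$$ There is no smooth function $B$ on $\Omega$ such that: (1) $0\le B(u,v,L,A)\le u$ on $\Omega$; (2) $\frac{\partial B}{\partial A}\ge c\,u\,L$ on $\Omega$; (3) $B$ is concave, i.e. $-d^2B\ge 0$ (the Hessian of $B$ is nonpositive definite) on $\Omega$; (4) the function $B_0(u,v,A):=\sup_{L:\,uv\le L\le P\sqrt{uv}}B(u,v,L,A)$ is concave on $\Omega_0$. *)

(* Defs.v *)
From Stdlib Require Import Reals List.
From Coquelicot Require Import Coquelicot.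
Open Scope R_scope.

(* Points of R^4, coordinates (u, v, L, A) indexed 0,1,2,3. *)
Definition pt := (R * R * R * R)%type.
Definition mkpt (u v L A : R) : pt := (u, v, L, A).

Definition coord (x : pt) (i : nat) : R :=
  match x with (u, v, L, A) =>
    match i with 0%nat => u | 1%nat => v | 2%nat => L | _ => A end end.

Definition shift (x : pt) (i : nat) (t : R) : pt :=
  match x with (u, v, L, A) =>
    match i with
    | 0%nat => (u + t, v, L, A)
    | 1%nat => (u, v + t, L, A)
    | 2%nat => (u, v, L + t, A)
    | _ => (u, v, L, A + t)
    end end.

Definition partial (i : nat) (f : pt -> R) : pt -> R :=
  fun x => Derive (fun t => f (shift x i t)) 0.

Fixpoint iter_partial (l : list nat) (f : pt -> R) : pt -> R :=
  match l with
  | nil => f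
  | i :: l' => partial i (iter_partial l' f)
  end.

Definition smooth_on (U : pt -> Prop) (f : pt -> R) : Prop :=
  forall (l : list nat) (x : pt), U x ->
    continuous (iter_partial l f) x /\
    forall i : nat, (i < 4)%nat -> ex_derive (fun t => iter_partial l f (shift x i t)) 0.

Definition Omega (P : R) (x : pt) : Prop :=
  match x with (u, v, L, A) =>
    0 <= A <= 1 /\ 0 <= u /\ 0 <= v /\ 0 <= L /\ u * v <= 1 /\
    u * v <= L <= P * sqrt (u * v)
  end.

Definition pt3 := (R * R * R)%type.
Definition Omega0 (x : pt3) : Prop :=
  match x with (u, v, A) => 0 <= A <= 1 /\ 0 <= u /\ 0 <= v /\ u * v <= 1 end.

Definition hessian_nonpos (f : pt -> R) (x : pt) : Prop :=
  forall h : pt,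
      fold_right Rplus 0
        (map (fun i => fold_right Rplus 0
           (map (fun j => coord h i * coord h j * iter_partial (i :: j :: nil) f x)
              (0 :: 1 :: 2 :: 3 :: nil)%nat))
         (0 :: 1 :: 2 :: 3 :: nil)%nat) <= 0.

Definition B0 (P : R) (B : pt -> R) (y : pt3) : R :=
  match y with (u, v, A) =>
    real (Lub_Rbar (fun z => exists L, u * v <= L <= P * sqrt (u * v) /\
                                        z = B (u, v, L, A)))
  end.

(* Concavity on a (possibly non-convex) set D: concave along every
   segment entirely contained in D. *)
Definition comb3 (t : R) (x y : pt3) : pt3 :=
  match x, y with (a1, b1, c1), (a2, b2, c2) =>
    ((1 - t) * a1 + t * a2, (1 - t) * b1 + t * b2, (1 - t) * c1 + t * c2) end.

Definition concave_on3 (D : pt3 -> Prop) (g : pt3 -> R) : Prop :=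
  forall x y : pt3,
    (forall s, 0 <= s <= 1 -> D (comb3 s x y)) ->
    forall t, 0 <= t <= 1 ->
      (1 - t) * g x + t * g y <= g (comb3 t x y).

(* Main.v *)
Require Import Defs.
From Stdlib Require Import Reals List Lra Lia.
From Coquelicot Require Import Coquelicot.
Open Scope R_scope.

Lemma deriv_shift (f : R -> R) (a d : R) :
  is_derive (fun t => f (a + t)) 0 d -> is_derive f a d.
Proof.
  intro H.
  assert (H1 : is_derive (fun y => (fun t => f (a + t)) (y - a)) a (scal 1 d)).
  { apply (is_derive_comp (fun t => f (a + t)) (fun y => y - a) a d 1).
    - replace (a - a) with 0 by ring. exact H.
    - auto_derive; auto; ring. }
  replace (scal 1 d) with d in H1 by (unfold scal; simpl; unfold mult; simpl; ring).
  apply (is_derive_ext _ _ _ _ (fun t => f_equal f (Rplus_minus a t))) in H1.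
  exact H1.
Qed.

Lemma lub_props (E : R -> Prop) (z0 K : R) :
  E z0 -> (forall z, E z -> z <= K) ->
  (forall z, E z -> z <= real (Lub_Rbar E)) /\
  (forall M, (forall z, E z -> z <= M) -> real (Lub_Rbar E) <= M).
Proof.
  intros Hz0 HK.
  destruct (Lub_Rbar_correct E) as [Hub Hl].
  destruct (Lub_Rbar E) as [l| |] eqn:El.
  - split.
    + intros z Hz. exact (Hub z Hz).
    + intros M HM. exact (Hl (Finite M) HM).
  - exfalso. exact (Hl (Finite K) HK).
  - exfalso. exact (Hub z0 Hz0).
Qed.

Lemma B_gain (P c : R) (B : pt -> R) (U : pt -> Prop) :
  (forall x, Omega P x -> U x) -> smooth_on U B ->
  (forall u v L A, Omega P (u,v,L,A) -> partial 3 B (u,v,L,A) >= c*u*L) ->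
  forall u v L a1 a2, (forall a, a1 <= a <= a2 -> Omega P (u,v,L,a)) -> a1 <= a2 ->
  B (u,v,L,a2) - B (u,v,L,a1) >= c*u*L*(a2 - a1).
Proof.
  intros hsub hsm hg u v L a1 a2 HO Ha.
  set (f := fun a => B (u,v,L,a)).
  assert (Hd : forall a, a1 <= a <= a2 -> is_derive f a (partial 3 B (u,v,L,a))).
  { intros a Ha'. apply deriv_shift.
    destruct (hsm nil (u,v,L,a) (hsub _ (HO a Ha'))) as [_ Hex].
    specialize (Hex 3%nat ltac:(lia)).
    exact (Derive_correct _ _ Hex). }
  destruct (MVT_gen f a1 a2 (fun a => partial 3 B (u,v,L,a))) as [xi [Hxi Heq]].
  - intros x Hx. rewrite Rmin_left in Hx by lra. rewrite Rmax_right in Hx by lra.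
    apply Hd; lra.
  - intros x Hx. rewrite Rmin_left in Hx by lra. rewrite Rmax_right in Hx by lra.
    apply continuity_pt_filterlim.
    exact (ex_derive_continuous (K:=R_AbsRing) (V:=R_NormedModule) f x
             (ex_intro _ _ (Hd x ltac:(lra)))).
  - rewrite Rmin_left in Hxi by lra. rewrite Rmax_right in Hxi by lra.
    unfold f in Heq. rewrite Heq.
    assert (H1 := hg u v L xi (HO xi Hxi)).
    apply Rle_ge. apply Rmult_le_compat_r; lra.
Qed.

Lemma conc_app (g : pt3 -> R) x y t z : concave_on3 Omega0 g ->
  (forall s, 0<=s<=1 -> Omega0 (comb3 s x y)) -> 0<=t<=1 -> comb3 t x y = z ->
  (1-t)*g x + t*g y <= g z.
Proof. intros H Hs Ht Hz. rewrite <- Hz. apply H; auto. Qed.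

Lemma sqrt_ge_self x : 0 <= x <= 1 -> x <= sqrt x.
Proof.
  intros Hx. assert (Hs : sqrt x <= 1).
  { rewrite <- sqrt_1. apply sqrt_le_1_alt. lra. }
  assert (H0 := sqrt_pos x).
  rewrite <- (sqrt_sqrt x) at 1 by lra. nra.
Qed.

Lemma B0_props (P : R) (B : pt -> R) u v A :
  1 <= P -> 0 <= A <= 1 -> 0 <= u -> 0 <= v -> u*v <= 1 ->
  (forall u v L A, Omega P (u, v, L, A) -> 0 <= B (u, v, L, A) <= u) ->
  (forall L, u*v <= L <= P*sqrt(u*v) -> B (u,v,L,A) <= B0 P B (u,v,A)) /\
  (forall M, (forall L, u*v <= L <= P*sqrt(u*v) -> B (u,v,L,A) <= M) -> B0 P B (u,v,A) <= M).
Proof.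
  intros HP HA Hu Hv Huv hb.
  assert (Huv0 : 0 <= u*v) by nra.
  assert (Hr : u*v <= P*sqrt(u*v)).
  { assert (H1 := sqrt_ge_self (u*v) ltac:(lra)). assert (H2 := sqrt_pos (u*v)). nra. }
  assert (HOm : forall L, u*v <= L <= P*sqrt(u*v) -> Omega P (u,v,L,A)).
  { intros L HL. simpl. repeat split; lra. }
  destruct (lub_props (fun z => exists L, u * v <= L <= P * sqrt (u * v) /\ z = B (u, v, L, A))
              (B (u,v,u*v,A)) u) as [H1 H2].
  - exists (u*v). split; [lra|reflexivity].
  - intros z [L [HL ->]]. apply (hb _ _ _ _ (HOm L HL)).
  - unfold B0. split.
    + intros L HL. apply H1. exists L. split; auto.
    + intros M HM. apply H2. intros z [L [HL ->]]. auto.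
Qed.

Theorem mainTheorem5 (c P : R) (hc : 0 < c) (hP : 1 <= P) :
  ~ exists B : pt -> R,
      (exists U : pt -> Prop, open U /\ (forall x, Omega P x -> U x) /\ smooth_on U B) /\
      (forall u v L A, Omega P (u, v, L, A) -> 0 <= B (u, v, L, A) <= u) /\
      (forall u v L A, Omega P (u, v, L, A) -> partial 3 B (u, v, L, A) >= c * u * L) /\
      (forall x, Omega P x -> hessian_nonpos B x) /\
      concave_on3 Omega0 (B0 P B).
Proof.
  intros [B [[U [_ [hsub hsm]]] [hb [hg [_ hconc]]]]].
  set (G := B0 P B) in *.
  assert (HG0 : forall u v A, 0 <= A <= 1 -> 0 <= u -> 0 <= v -> u*v <= 1 -> 0 <= G (u,v,A)).
  { intros u v A HA Hu Hv Huv.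
    destruct (B0_props P B u v A hP HA Hu Hv Huv hb) as [H1 _].
    assert (Huv0 : 0 <= u*v) by nra.
    assert (Hr : u*v <= P*sqrt(u*v)).
    { assert (H3 := sqrt_ge_self (u*v) ltac:(lra)). assert (H2 := sqrt_pos (u*v)). nra. }
    apply Rle_trans with (B (u,v,u*v,A)).
    - apply (hb u v (u*v) A). simpl. repeat split; lra.
    - apply H1. lra. }
  assert (HGu : forall u v A, 0 <= A <= 1 -> 0 <= u -> 0 <= v -> u*v <= 1 -> G (u,v,A) <= u).
  { intros u v A HA Hu Hv Huv.
    destruct (B0_props P B u v A hP HA Hu Hv Huv hb) as [_ H2].
    apply H2. intros L HL. apply (hb u v L A).
    assert (Huv0 : 0 <= u*v) by nra. simpl. repeat split; lra. }
  assert (Hgn : forall u v a1 a2, 0 <= u -> 0 <= v -> u*v = 1 -> 0 <= a1 -> a1 <= a2 -> a2 <= 1 ->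
             G (u,v,a1) + c*u*(a2-a1) <= G (u,v,a2)).
  { intros u v a1 a2 Hu Hv Huv H1 H2 H3.
    destruct (B0_props P B u v a1 hP ltac:(lra) Hu Hv ltac:(lra) hb) as [_ Hl].
    destruct (B0_props P B u v a2 hP ltac:(lra) Hu Hv ltac:(lra) hb) as [Hu2 _].
    cut (G (u,v,a1) <= G (u,v,a2) - c*u*(a2-a1)); [lra|].
    apply Hl. intros L HL.
    assert (Hgain := B_gain P c B U hsub hsm hg u v L a1 a2).
    assert (HO : forall a, a1 <= a <= a2 -> Omega P (u,v,L,a)).
    { intros a Ha. simpl. repeat split; lra. }
    specialize (Hgain HO H2).
    assert (HB2 := Hu2 L HL).
    assert (Hc : 0 <= c*u*(a2-a1)) by (apply Rmult_le_pos; [apply Rmult_le_pos|]; lra).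
    assert (c*u*(a2-a1) <= c*u*L*(a2-a1)).
    { replace (c*u*L*(a2-a1)) with (c*u*(a2-a1)*L) by ring.
      rewrite Huv in HL. nra. }
    unfold G in *. lra. }
  set (E := fun z => exists u v, 0 < u /\ 0 < v /\ u*v = 1 /\ z = G (u,v,1/2) / u).
  destruct (Glb_Rbar_correct E) as [Hlb Hgl].
  assert (HE1 : E (G (1,1,1/2) / 1)).
  { exists 1, 1. repeat split; lra. }
  assert (HE0 : is_lb_Rbar E 0).
  { intros z [u [v [Hu [Hv [Huv ->]]]]]. simpl.
    apply Rdiv_le_0_compat; [apply HG0; lra|lra]. }
  destruct (Glb_Rbar E) as [m| |] eqn:Em.
  2: { exfalso. exact (Hlb _ HE1). }
  2: { exfalso. exact (Hgl _ HE0). }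
  assert (Hm1 : m <= 1).
  { assert (H : m <= G (1,1,1/2)/1) by exact (Hlb _ HE1).
    assert (H2 := HGu 1 1 (1/2) ltac:(lra) ltac:(lra) ltac:(lra) ltac:(lra)).
    unfold Rdiv in H. rewrite Rinv_1, Rmult_1_r in H. lra. }
  assert (Hmz : forall u v, 0 < u -> 0 < v -> u*v = 1 -> u * m <= G (u,v,1/2)).
  { intros u v Hu Hv Huv. assert (H := Hlb (G (u,v,1/2)/u) ltac:(exists u, v; repeat split; auto)).
    change (m <= G (u,v,1/2)/u) in H. apply (Rmult_le_compat_l u) in H; [|lra].
    replace (u * (G (u,v,1/2) / u)) with (G (u,v,1/2)) in H by (field; lra). exact H. }
  set (tau := 2/(2+c)).
  assert (Htau : tau * (2+c) = 2) by (unfold tau; field; lra).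
  assert (Ht0 : 0 < tau) by (unfold tau; apply Rdiv_lt_0_compat; lra).
  assert (Ht1 : tau < 1) by nra.
  set (p := 1 + tau). set (q := 1 - tau).
  assert (Hq : 0 < q) by (unfold q; lra).
  assert (Hp : 0 < p) by (unfold p; lra).
  assert (Hkey : forall u0 v0, 0 < u0 -> 0 < v0 -> u0*v0 = 1 -> u0 * (m + c/8) <= G (u0,v0,1/2)).
  { intros u0 v0 Hu0 Hv0 Huv.
    assert (HX : p*u0*(m + c/4) <= G (u0*p, v0*q, 3/4)).
    { assert (Hc1 := conc_app G (0, v0*q, 3/4) (u0/q, v0*q, 3/4) (p*q) (u0*p, v0*q, 3/4) hconc).
      assert (H0 : 0 <= G (0, v0*q, 3/4)) by (apply HG0; nra).
      assert (H1 := Hgn (u0/q) (v0*q) (1/2) (3/4) ltac:(apply Rlt_le, Rdiv_lt_0_compat; lra)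
                  ltac:(nra) ltac:(field_simplify; [lra|lra]) ltac:(lra) ltac:(lra) ltac:(lra)).
      assert (H2 := Hmz (u0/q) (v0*q) ltac:(apply Rdiv_lt_0_compat; lra) ltac:(nra)
                  ltac:(field_simplify; [lra|lra])).
      assert (Hpq : 0 <= p*q <= 1) by (unfold p, q; nra).
      specialize (Hc1 ltac:(intros s Hs; simpl; repeat split; try lra; try nra;
                      [apply Rplus_le_le_0_compat; apply Rmult_le_pos; try lra; apply Rlt_le, Rdiv_lt_0_compat; lra
                      |replace (((1 - s) * 0 + s * (u0 / q)) * ((1 - s) * (v0 * q) + s * (v0 * q))) with (s * (u0*v0)) by (field; lra); nra])
                      Hpq ltac:(unfold comb3; f_equal; [f_equal|]; field; lra)).
      replace (p*u0*(m+c/4)) with ((p*q) * ((u0/q)*m + c*(u0/q)*(3/4 - 1/2))) by (field; lra).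
      assert (Hd : 0 <= (1 - p*q) * G (0, v0*q, 3/4)) by (apply Rmult_le_pos; lra).
      apply Rle_trans with ((1 - p*q) * G (0, v0*q, 3/4) + p*q * G (u0/q, v0*q, 3/4)); [|exact Hc1].
      apply Rle_trans with (p*q * G (u0/q, v0*q, 3/4)); [|lra].
      apply Rmult_le_compat_l; lra. }
    assert (HY : q*u0*m/2 <= G (u0*q, v0*p, 1/4)).
    { assert (HY1 : (u0/p)*m/2 <= G (u0/p, v0*p, 1/4)).
      { assert (Hc1 := conc_app G (u0/p, v0*p, 0) (u0/p, v0*p, 1/2) (1/2) (u0/p, v0*p, 1/4) hconc).
        assert (H0 : 0 <= G (u0/p, v0*p, 0)).
        { apply HG0; try lra. apply Rlt_le, Rdiv_lt_0_compat; lra. nra.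
          replace (u0 / p * (v0 * p)) with (u0*v0) by (field; lra). lra. }
        assert (H2 := Hmz (u0/p) (v0*p) ltac:(apply Rdiv_lt_0_compat; lra) ltac:(nra)
                  ltac:(field_simplify; [lra|lra])).
        specialize (Hc1 ltac:(intros s Hs; simpl; repeat split; try lra; try nra;
                      [apply Rplus_le_le_0_compat; apply Rmult_le_pos; try lra; apply Rlt_le, Rdiv_lt_0_compat; lra
                      |replace (((1 - s) * (u0 / p) + s * (u0 / p)) * ((1 - s) * (v0 * p) + s * (v0 * p))) with (u0*v0) by (field; lra); nra])
                      ltac:(lra) ltac:(unfold comb3; f_equal; [f_equal|]; field; lra)).
        lra. }
      assert (Hc1 := conc_app G (0, v0*p, 1/4) (u0/p, v0*p, 1/4) (p*q) (u0*q, v0*p, 1/4) hconc).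
      assert (H0 : 0 <= G (0, v0*p, 1/4)) by (apply HG0; nra).
      assert (Hpq : 0 <= p*q <= 1) by (unfold p, q; nra).
      specialize (Hc1 ltac:(intros s Hs; simpl; repeat split; try lra; try nra;
                      [apply Rplus_le_le_0_compat; apply Rmult_le_pos; try lra; apply Rlt_le, Rdiv_lt_0_compat; lra
                      |replace (((1 - s) * 0 + s * (u0 / p)) * ((1 - s) * (v0 * p) + s * (v0 * p))) with (s * (u0*v0)) by (field; lra); nra])
                      Hpq ltac:(unfold comb3; f_equal; [f_equal|]; field; lra)).
      replace (q*u0*m/2) with ((p*q) * ((u0/p)*m/2)) by (field; lra).
      assert (Hd : 0 <= (1 - p*q) * G (0, v0*p, 1/4)) by (apply Rmult_le_pos; lra).
      apply Rle_trans with ((1 - p*q) * G (0, v0*p, 1/4) + p*q * G (u0/p, v0*p, 1/4)); [|exact Hc1].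
      apply Rle_trans with (p*q * G (u0/p, v0*p, 1/4)); [|lra].
      apply Rmult_le_compat_l; lra. }
    assert (Hc1 := conc_app G (u0*p, v0*q, 3/4) (u0*q, v0*p, 1/4) (1/2) (u0, v0, 1/2) hconc).
    assert (Hseg : forall s, 0 <= s <= 1 -> Omega0 (comb3 s (u0*p, v0*q, 3/4) (u0*q, v0*p, 1/4))).
    { intros s Hs; simpl.
      assert (Hpr : ((1 - s) * (u0 * p) + s * (u0 * q)) * ((1 - s) * (v0 * q) + s * (v0 * p))
                   = (u0*v0) * (1 - tau^2*(1-2*s)^2)) by (unfold p, q; ring).
      rewrite Hpr, Huv.
      assert (0 <= tau^2*(1-2*s)^2) by (apply Rmult_le_pos; apply pow2_ge_0).
      assert (0 < u0*p) by nra. assert (0 < u0*q) by nra.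
      assert (0 < v0*p) by nra. assert (0 < v0*q) by nra.
      repeat split; try lra; nra. }
    specialize (Hc1 Hseg ltac:(lra) ltac:(unfold comb3; f_equal; [f_equal|]; unfold p, q; field)).
    assert (Hbr : 0 <= p/2*(m+c/4) + q*m/4 - (m + c/8)).
    { replace (p/2*(m+c/4) + q*m/4 - (m + c/8)) with ((tau*(2+c) - 2)/8 + (1-tau)*(1-m)/4)
        by (unfold p, q; field).
      rewrite Htau. nra. }
    assert (u0 * (p/2*(m+c/4) + q*m/4 - (m + c/8)) >= 0) by nra.
    nra. }
  assert (Hl : is_lb_Rbar E (m + c/8)).
  { intros z [u [v [Hu [Hv [Huv ->]]]]]. change (m + c/8 <= G (u,v,1/2)/u).
    assert (H := Hkey u v Hu Hv Huv).
    apply (Rmult_le_reg_l u); [lra|].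
    replace (u * (G (u,v,1/2) / u)) with (G (u,v,1/2)) by (field; lra). exact H. }
  assert (H := Hgl _ Hl). simpl in H. lra.
Qed.
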